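(* Let $P\ge3$ be an integer and $\alpha=a/q$ with $q$ a positive integer and $\gcd(a,q)=1$. Let $k$ be a positive integer with $g=\gcd(k,q)\le4$. Then for every positive integer $Q$, every real number $\beta$ and every $\varepsilon$ with $0<\varepsilon\le1$, $$\sum_{x=0}^{Q-1}\min\Big(P,\frac{1}{2\|k\alpha x+\beta\|}\Big)\le\Big(1+\frac{gQ}{q}\Big)(P+q)\frac{2P^{\varepsilon}}{\varepsilon}.$$
   Context: For a real number $t$, $\|t\|=\min_{n\in\mathbb{Z}}|t-n|$ is the distance from $t$ to the nearest integer; when $\|t\|=0$ the minimum $\min(P,1/(2\|t\|))$ is taken to be $P$. *)

(* Defs.v *)
From Stdlib Require Import Reals ZArith Lra.
Open Scope R_scope.

Definition frac_part (t : R) : R := t - IZR (Int_part t).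

(* ||t|| = min_{n in Z} |t - n| = min(frac t, 1 - frac t) *)
Definition dist_nint (t : R) : R := Rmin (frac_part t) (1 - frac_part t).

(* min(P, 1/(2||t||)), taken to be P when ||t|| = 0 *)
Definition minterm (P t : R) : R :=
  if Req_EM_T (dist_nint t) 0 then P else Rmin P (/ (2 * dist_nint t)).

(* Main.v *)
Require Import Defs.
From Stdlib Require Import Reals ZArith Lra Lia List Znumtheory.
Open Scope R_scope.

Lemma ln_le' x y : 0 < x -> x <= y -> ln x <= ln y.
Proof. intros Hx Hxy. destruct (Rle_lt_or_eq_dec _ _ Hxy) as [H|H].
  left; apply ln_increasing; lra. subst; lra. Qed.

Lemma ln_le_xm1 z : 0 < z -> ln z <= z - 1.
Proof. intros Hz. pose proof (exp_ineq1_le (z-1)).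
  rewrite <- (ln_exp (z-1)). apply ln_le'; lra. Qed.

Lemma key_inv y : 0 < y - 1 -> / y <= ln y - ln (y - 1).
Proof. intros H.
  assert (Hy : 0 < y) by lra.
  assert (E : y - 1 = y * ((y-1) / y)) by (field; lra).
  assert (Hq : 0 < (y-1)/y) by (apply Rdiv_lt_0_compat; lra).
  rewrite E, ln_mult by lra.
  pose proof (ln_le_xm1 _ Hq).
  assert ((y-1)/y - 1 = - / y) by (field; lra). lra. Qed.

Lemma harm1 u m : 0 < u ->
  sum_f_R0 (fun j => / (INR j + u)) m <= / u + ln (INR m + u) - ln u.
Proof. intros Hu. induction m as [|m IH].
  - simpl. replace (0 + u) with u by ring. lra.
  - rewrite tech5, S_INR.
    pose proof (pos_INR m).
    pose proof (key_inv (INR m + 1 + u)).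
    replace (INR m + 1 + u - 1) with (INR m + u) in H0 by ring.
    assert (0 < INR m + u) by lra. specialize (H0 H1). lra. Qed.

Lemma harm2 v m : 0 < v - INR m ->
  sum_f_R0 (fun j => / (v - INR j)) m <= / (v - INR m) + ln v - ln (v - INR m).
Proof. induction m as [|m IH]; intros Hv.
  - simpl. replace (v - 0) with v by ring. lra.
  - rewrite tech5. rewrite S_INR in *.
    assert (0 < v - INR m) by lra. specialize (IH H).
    pose proof (key_inv (v - INR m)).
    replace (v - INR m - 1) with (v - (INR m + 1)) in H0 by ring.
    specialize (H0 Hv). lra. Qed.

Lemma min_bound Pr s y : 0 < s -> Pr = / (2 * s) -> 0 < y -> Rmin Pr (/ (2 * y)) <= / (y + s).
Proof. intros Hs HP Hy. destruct (Rle_dec y s).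
  - apply Rle_trans with Pr. apply Rmin_l. rewrite HP. apply Rinv_le_contravar; lra.
  - apply Rle_trans with (/ (2*y)). apply Rmin_r. apply Rinv_le_contravar; lra. Qed.

Lemma up_shift t m : up (t + IZR m) = (up t + m)%Z.
Proof. symmetry. apply tech_up; rewrite plus_IZR; destruct (archimed t); lra. Qed.

Lemma frac_shift t m : frac_part (t + IZR m) = frac_part t.
Proof. unfold frac_part, Int_part. rewrite up_shift, !minus_IZR, plus_IZR. ring. Qed.

Lemma minterm_shift Pr t m : minterm Pr (t + IZR m) = minterm Pr t.
Proof. unfold minterm, dist_nint. rewrite frac_shift. reflexivity. Qed.

Lemma frac_unit t : 0 <= t < 1 -> frac_part t = t.
Proof. intros H. unfold frac_part, Int_part.
  assert (up t = 1%Z) by (symmetry; apply tech_up; simpl; lra).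
  rewrite H0. simpl. ring. Qed.

Lemma minterm_bound Pr s t : 0 < s -> Pr = / (2 * s) -> 0 <= t < 1 ->
  minterm Pr t <= / (t + s) + / (1 - t + s).
Proof. intros Hs HP Ht. unfold minterm, dist_nint. rewrite frac_unit by lra.
  assert (0 < / (t + s)) by (apply Rinv_0_lt_compat; lra).
  assert (0 < / (1 - t + s)) by (apply Rinv_0_lt_compat; lra).
  destruct (Req_EM_T _ _) as [E|E].
  - unfold Rmin in E. destruct (Rle_dec t (1-t)); [|lra]. subst t.
    assert (Pr <= / (0 + s)). rewrite HP. apply Rinv_le_contravar; lra. lra.
  - unfold Rmin in *. destruct (Rle_dec t (1-t)).
    + assert (0 < t) by (destruct (proj1 Ht); [lra| subst; lra]).
      pose proof (min_bound Pr s t Hs HP H1). unfold Rmin in H2. lra.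
    + pose proof (min_bound Pr s (1-t) Hs HP ltac:(lra)). unfold Rmin in H1. lra.
Qed.

Definition lsum (f : nat -> R) (l : list nat) : R := fold_right (fun x acc => f x + acc) 0 l.

Lemma lsum_app f l1 l2 : lsum f (l1 ++ l2) = lsum f l1 + lsum f l2.
Proof. induction l1; simpl; [ring| rewrite IHl1; ring]. Qed.

Lemma sum_lsum f m : sum_f_R0 f m = lsum f (seq 0 (S m)).
Proof. induction m. simpl. ring. rewrite tech5, IHm, (seq_S (S m)), lsum_app. simpl. ring. Qed.

Lemma lsum_le f g l : (forall x, f x <= g x) -> lsum f l <= lsum g l.
Proof. intros H; induction l; simpl. lra. specialize (H a). lra. Qed.

Lemma lsum_nonneg U L : (forall y, In y L -> 0 <= U y) -> 0 <= lsum U L.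
Proof. induction L; simpl; intros H. lra.
  assert (0 <= U a) by auto. assert (0 <= lsum U L) by auto. lra. Qed.

Lemma lsum_sub U l : forall L, NoDup l -> incl l L -> NoDup L ->
  (forall y, In y L -> 0 <= U y) -> lsum U l <= lsum U L.
Proof. induction l as [|a l IH]; intros L Hl Hi HL HU.
  - simpl. apply lsum_nonneg; auto.
  - assert (Ha : In a L) by (apply Hi; simpl; auto).
    destruct (in_split _ _ Ha) as [L1 [L2 E]]. subst L.
    rewrite lsum_app. simpl.
    inversion Hl; subst.
    assert (lsum U l <= lsum U (L1 ++ L2)).
    { apply IH. auto.
      - intros y Hy. assert (In y (L1 ++ a :: L2)) by (apply Hi; simpl; auto).
        apply in_app_or in H. apply in_or_app. destruct H; auto.
        simpl in H. destruct H; auto. subst; contradiction.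
      - eapply NoDup_remove_1; eauto.
      - intros y Hy. apply HU. apply in_app_or in Hy. apply in_or_app. simpl. tauto. }
    rewrite lsum_app in H. lra. Qed.

Lemma lsum_map U j l : lsum U (map j l) = lsum (fun x => U (j x)) l.
Proof. induction l; simpl; [reflexivity| rewrite IHl; reflexivity]. Qed.

Section Block.
Variables (j : nat -> nat) (n : nat) (U : nat -> R).
Hypothesis jlt : forall x, (j x < n)%nat.
Hypothesis jinj : forall x0 x1 x2, (x0 <= x1 < x0 + n)%nat -> (x0 <= x2 < x0 + n)%nat -> j x1 = j x2 -> x1 = x2.
Hypothesis Unn : forall y, (y < n)%nat -> 0 <= U y.

Lemma block_one x0 Q : (Q <= n)%nat -> lsum (fun x => U (j x)) (seq x0 Q) <= lsum U (seq 0 n).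
Proof. intros HQ. rewrite <- lsum_map. apply lsum_sub.
  - apply NoDup_map_NoDup_ForallPairs. intros x1 x2 H1 H2 E.
    apply in_seq in H1. apply in_seq in H2. apply (jinj x0); lia.
    apply seq_NoDup.
  - intros y Hy. apply in_map_iff in Hy. destruct Hy as [x [<- _]]. apply in_seq. specialize (jlt x). lia.
  - apply seq_NoDup.
  - intros y Hy. apply in_seq in Hy. apply Unn. lia. Qed.

Lemma blocks M : forall x0 Q, (Q <= M * n)%nat ->
  lsum (fun x => U (j x)) (seq x0 Q) <= INR M * lsum U (seq 0 n).
Proof. assert (HT : 0 <= lsum U (seq 0 n)).
  { apply lsum_nonneg. intros y Hy. apply in_seq in Hy. apply Unn. lia. }
  induction M as [|M IH]; intros x0 Q HQ.
  - simpl in HQ. assert (Q = 0%nat) by lia. subst. simpl. lra.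
  - destruct (le_lt_dec Q n).
    + rewrite S_INR. pose proof (block_one x0 Q l). pose proof (pos_INR M). nra.
    + replace Q with (n + (Q - n))%nat by lia. rewrite seq_app, lsum_app.
      pose proof (block_one x0 n (le_n n)). rewrite S_INR.
      assert (lsum (fun x => U (j x)) (seq (x0 + n) (Q - n)) <= INR M * lsum U (seq 0 n)).
      { apply IH. simpl in HQ. lia. }
      lra. Qed.
End Block.
Lemma piece N Pr s w : 1 <= N -> 0 < s -> 2*Pr*s = 1 -> N*s <= w ->
  N * / w <= 2*Pr /\ ln (N-1+w) - ln w <= ln (1+2*Pr).
Proof. intros HN Hs HPs Hw.
  assert (0 < N*s) by nra.
  assert (HPr : 0 < Pr) by nra.
  split.
  - apply Rle_trans with (N * / (N*s)). apply Rmult_le_compat_l. lra.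
    apply Rinv_le_contravar; lra.
    replace (N * / (N*s)) with (/ s) by (field; lra).
    assert (2*Pr = /s). { apply (Rmult_eq_reg_r s); [|lra]. rewrite Rinv_l by lra. exact HPs. }
    lra.
  - assert (E1 : 2*Pr*(N*s) = N) by (transitivity (N*(2*Pr*s)); [ring| rewrite HPs; ring]).
    assert (E2 : 0 <= 2*Pr*(w - N*s)) by (apply Rmult_le_pos; lra).
    assert (N - 1 + w <= (1 + 2*Pr) * w).
    { replace ((1+2*Pr)*w) with (w + 2*Pr*(w - N*s) + 2*Pr*(N*s)) by ring. rewrite E1. lra. }
    pose proof (ln_le' (N-1+w) _ ltac:(lra) H0). rewrite ln_mult in H1 by lra. lra.
Qed.

Lemma exp1_ge : 7/3 <= exp 1.
Proof. replace 1 with (/3 + /3 + /3) by field. rewrite !exp_plus.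
  pose proof (exp_ineq1_le (/3)). nra. Qed.

Lemma Ebound Pr eps : 3 <= Pr -> 0 < eps <= 1 ->
  1 + ln Pr <= Rpower Pr eps / eps /\ 2 <= 1 + ln Pr /\ ln (1 + 2*Pr) <= 1 + ln Pr /\ 0 <= ln (1 + 2*Pr).
Proof. intros HP He. unfold Rpower.
  assert (Hl3 : 1 <= ln Pr).
  { rewrite <- (ln_exp 1) at 1. apply ln_le'. apply exp_pos. pose proof exp_le_3. lra. }
  repeat split.
  - pose proof (exp_ineq1_le (eps * ln Pr)).
    apply (Rmult_le_reg_r eps). lra. unfold Rdiv. rewrite Rmult_assoc, Rinv_l by lra.
    nra.
  - lra.
  - pose proof exp1_ge. replace 1 with (ln (exp 1)) at 2 by apply ln_exp.
    rewrite <- ln_mult by (try apply exp_pos; lra). apply ln_le'; nra.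
  - rewrite <- ln_1. apply ln_le'; lra.
Qed.

Theorem lemma10 (P : nat) (a q k : Z) (Q : nat) (beta eps : R) :
  (3 <= P)%nat ->
  (0 < q)%Z -> Z.gcd a q = 1%Z ->
  (0 < k)%Z -> (Z.gcd k q <= 4)%Z ->
  (1 <= Q)%nat ->
  0 < eps <= 1 ->
  sum_f_R0 (fun x : nat =>
      minterm (INR P) (IZR k * (IZR a / IZR q) * INR x + beta)) (Q - 1)
  <= (1 + IZR (Z.gcd k q) * INR Q / IZR q) * (INR P + IZR q)
     * (2 * Rpower (INR P) eps / eps).
Proof.
  intros HP Hq Haq Hk _ HQ Heps.
  set (g := Z.gcd k q).
  assert (Hg : (0 < g)%Z).
  { pose proof (Z.gcd_nonneg k q). destruct (Z.eq_dec g 0) as [E|E].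
    apply Z.gcd_eq_0_r in E. lia. unfold g in *; lia. }
  destruct (Z.gcd_divide_r k q) as [nz Hnz]. fold g in Hnz.
  destruct (Z.gcd_divide_l k q) as [k' Hk']. fold g in Hk'.
  assert (Hnzp : (0 < nz)%Z) by nia.
  assert (Hcop : Z.gcd nz (k' * a) = 1%Z).
  { apply Zgcd_1_rel_prime. apply rel_prime_mult.
    - pose proof (Z.gcd_div_gcd k q g ltac:(lia) eq_refl) as H.
      rewrite Hnz, Hk', !Z.div_mul in H by lia.
      apply rel_prime_sym, Zgcd_1_rel_prime, H.
    - apply rel_prime_div with q. apply rel_prime_sym, Zgcd_1_rel_prime, Haq.
      exists g. lia. }
  set (a' := (k' * a)%Z) in *.
  set (n := Z.to_nat nz).
  assert (HnN : IZR nz = INR n) by (unfold n; rewrite INR_IZR_INZ, Z2Nat.id; [reflexivity|lia]).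
  assert (Hn1 : (1 <= n)%nat) by (unfold n; change 1%nat with (Z.to_nat 1); apply Z2Nat.inj_le; lia).
  set (N := IZR nz).
  assert (HN : 1 <= N) by (unfold N; apply IZR_le; lia).
  set (r := beta * N).
  set (b := Int_part r).
  set (th := r - IZR b).
  assert (Hth : 0 <= th < 1).
  { unfold th, b, Int_part. rewrite minus_IZR. destruct (archimed r). simpl. lra. }
  set (z := fun x : nat => (a' * Z.of_nat x + b)%Z).
  set (j := fun x : nat => Z.to_nat (z x mod nz)).
  assert (Hj : forall x, (j x < n)%nat).
  { intros x. unfold j, n. pose proof (Z.mod_pos_bound (z x) nz Hnzp). lia. }
  assert (HjR : forall x, INR (j x) = IZR (z x mod nz)).
  { intros x. unfold j. rewrite INR_IZR_INZ, Z2Nat.id. reflexivity.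
    pose proof (Z.mod_pos_bound (z x) nz Hnzp). lia. }
  set (Pr := INR P).
  assert (HPr : 3 <= Pr) by (unfold Pr; replace 3 with (INR 3) by (simpl; ring); apply le_INR; lia).
  set (s := / (2 * Pr)).
  assert (Hs : 0 < s) by (unfold s; apply Rinv_0_lt_compat; lra).
  assert (HPs : Pr = / (2 * s)) by (unfold s; field; lra).
  set (U := fun y : nat => / ((INR y + th) / N + s) + / (1 - (INR y + th) / N + s)).
  assert (Hpt : forall x, minterm Pr (IZR k * (IZR a / IZR q) * INR x + beta) <= U (j x)).
  { intros x.
    assert (E : IZR k * (IZR a / IZR q) * INR x + beta = (INR (j x) + th) / N + IZR (z x / nz)).
    { rewrite HjR. pose proof (Z.div_mod (z x) nz ltac:(lia)) as Hd.
      assert (IZR (z x) = N * IZR (z x / nz) + IZR (z x mod nz)) as Hd'.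
      { unfold N. rewrite <- mult_IZR, <- plus_IZR. f_equal. exact Hd. }
      assert (IZR (z x) = IZR a' * INR x + IZR b) as Hz.
      { unfold z. rewrite plus_IZR, mult_IZR, <- INR_IZR_INZ. reflexivity. }
      assert (Hr : beta = (IZR b + th) / N) by (unfold th, r; field; lra).
      rewrite Hr. unfold a' in Hz. rewrite mult_IZR in Hz.
      rewrite Hk', Hnz, !mult_IZR.
      assert (IZR g <> 0) by (apply not_0_IZR; lia).
      fold N. 
      apply (Rmult_eq_reg_l N); [| lra].
      field_simplify; [| lra | lra].
      rewrite <- Hz, Hd'. ring. }
    rewrite E, minterm_shift. unfold U. apply minterm_bound; auto.
    split. apply Rmult_le_pos. pose proof (pos_INR (j x)); lra. left; apply Rinv_0_lt_compat; lra.
    apply (Rmult_lt_reg_r N). lra. unfold Rdiv. rewrite Rmult_assoc, Rinv_l by lra.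
    specialize (Hj x).
    assert (INR (S (j x)) <= N). { unfold N. rewrite HnN. apply le_INR. exact Hj. }
    rewrite S_INR in H. lra. }
  assert (Unn : forall y, (y < n)%nat -> 0 <= U y).
  { intros y Hy.
    assert (INR (S y) <= N) by (unfold N; rewrite HnN; apply le_INR; exact Hy).
    rewrite S_INR in H. pose proof (pos_INR y).
    assert (0 <= (INR y + th) / N) by (unfold Rdiv; apply Rmult_le_pos; [lra| left; apply Rinv_0_lt_compat; lra]).
    assert ((INR y + th) / N < 1).
    { apply (Rmult_lt_reg_r N). lra. unfold Rdiv. rewrite Rmult_assoc, Rinv_l by lra. lra. }
    unfold U. apply Rplus_le_le_0_compat; left; apply Rinv_0_lt_compat; lra. }
  assert (jinj : forall x0 x1 x2, (x0 <= x1 < x0 + n)%nat -> (x0 <= x2 < x0 + n)%nat -> j x1 = j x2 -> x1 = x2).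
  { intros x0 x1 x2 H1 H2 E. unfold j in E.
    pose proof (Z.mod_pos_bound (z x1) nz Hnzp). pose proof (Z.mod_pos_bound (z x2) nz Hnzp).
    apply Z2Nat.inj in E; try lia.
    pose proof (Z.div_mod (z x1) nz ltac:(lia)). pose proof (Z.div_mod (z x2) nz ltac:(lia)).
    assert (Hd : (nz | a' * (Z.of_nat x1 - Z.of_nat x2))%Z).
    { exists (z x1 / nz - z x2 / nz)%Z. unfold z in *. lia. }
    apply Z.gauss in Hd; [|exact Hcop]. destruct Hd as [c Hc].
    assert (Hn' : Z.of_nat n = nz) by (unfold n; apply Z2Nat.id; lia).
    assert (Hb : (- nz < Z.of_nat x1 - Z.of_nat x2 < nz)%Z) by lia.
    destruct (Z.eq_dec c 0) as [->|Hc0]. lia.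
    assert (nz <= Z.abs (c*nz))%Z by (rewrite Z.abs_mul; nia). lia. }
  set (M := ((Q + n - 1) / n)%nat).
  assert (HMQ : (Q <= M * n <= Q + n - 1)%nat).
  { pose proof (Nat.div_mod (Q + n - 1) n ltac:(lia)). pose proof (Nat.mod_upper_bound (Q + n - 1) n ltac:(lia)).
    fold M in H, H0. nia. }
  set (T := lsum U (seq 0 n)).
  assert (Hsum : sum_f_R0 (fun x : nat => minterm Pr (IZR k * (IZR a / IZR q) * INR x + beta)) (Q - 1) <= INR M * T).
  { rewrite sum_lsum. replace (S (Q - 1)) with Q by lia.
    eapply Rle_trans. apply lsum_le. exact Hpt.
    apply (blocks j n U Hj jinj Unn). lia. }
  assert (HT0 : 0 <= T).
  { apply lsum_nonneg. intros y Hy. apply in_seq in Hy. apply Unn. lia. }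
  assert (Hs2 : 2 * Pr * s = 1) by (unfold s; field; lra).
  set (L := ln (1 + 2 * Pr)).
  assert (HTb : T <= 4 * Pr + 2 * N * L).
  { unfold T. replace n with (S (n - 1)) by lia. rewrite <- sum_lsum.
    set (u := th + N * s). set (v := N - th + N * s).
    assert (HNm : INR (n - 1) = N - 1) by (rewrite minus_INR by lia; unfold N; rewrite HnN; simpl; ring).
    rewrite (sum_eq U (fun i => / (INR i + u) * N + / (v - INR i) * N)).
    2:{ intros i Hi. apply le_INR in Hi. rewrite HNm in Hi. pose proof (pos_INR i).
        unfold U.
        assert (E1 : (INR i + th) / N + s = (INR i + u) * / N) by (unfold u; field; lra).
        assert (E2 : 1 - (INR i + th) / N + s = (v - INR i) * / N) by (unfold v; field; lra).
        rewrite E1, E2, !Rinv_mult, !Rinv_inv. ring. }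
    rewrite plus_sum, <- !scal_sum.
    pose proof (pos_INR (n-1)).
    assert (Hu : 0 < u) by (unfold u; nra).
    pose proof (harm1 u (n-1) Hu) as H1.
    assert (Hv : 0 < v - INR (n-1)) by (rewrite HNm; unfold v; nra).
    pose proof (harm2 v (n-1) Hv) as H2.
    rewrite HNm in H1, H2.
    replace (v - (N - 1)) with (1 - th + N * s) in H2 by (unfold v; ring).
    replace v with (N - 1 + (1 - th + N*s)) in H2 by (unfold v; ring).
    destruct (piece N Pr s u HN Hs Hs2 ltac:(unfold u; lra)) as [P1 P2].
    destruct (piece N Pr s (1 - th + N*s) HN Hs Hs2 ltac:(lra)) as [P3 P4].
    replace (N - 1 + u) with (INR (n-1) + u) in P2 by (rewrite HNm; ring). rewrite HNm in P2.
    fold L in P2, P4.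
    assert (N * sum_f_R0 (fun j0 : nat => / (INR j0 + u)) (n - 1) <= N * (/ u + ln (N - 1 + u) - ln u))
      by (apply Rmult_le_compat_l; lra).
    assert (N * sum_f_R0 (fun j0 : nat => / (N - 1 + (1 - th + N * s) - INR j0)) (n - 1) <=
            N * (/ (1 - th + N * s) + ln (N - 1 + (1 - th + N * s)) - ln (1 - th + N * s)))
      by (apply Rmult_le_compat_l; lra).
    replace (N - 1 + (1 - th + N * s)) with v in * by (unfold v; ring).
    assert (N * (ln (N - 1 + u) - ln u) <= N * L) by (apply Rmult_le_compat_l; lra).
    assert (N * (ln v - ln (1 - th + N * s)) <= N * L).
    { apply Rmult_le_compat_l; lra. }
    nra. }
  destruct (Ebound Pr eps HPr Heps) as [E1 [E2 [E3 E4]]]. fold L in E3, E4.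
  set (E := Rpower Pr eps / eps) in *.
  assert (Hqg : IZR q = N * IZR g) by (unfold N; rewrite Hnz, mult_IZR; reflexivity).
  assert (Hg1 : 1 <= IZR g) by (apply IZR_le; lia).
  assert (HqN : N <= IZR q) by (rewrite Hqg; nra).
  assert (HMr : INR M <= 1 + INR Q / N).
  { assert (INR M * N <= INR Q + N - 1).
    { unfold N; rewrite HnN, <- mult_INR.
      replace (INR Q + INR n - 1) with (INR (Q + n - 1)) by (rewrite minus_INR, plus_INR by lia; simpl; ring).
      apply le_INR. lia. }
    apply (Rmult_le_reg_r N). lra. rewrite Rmult_plus_distr_r. unfold Rdiv. rewrite Rmult_assoc, Rinv_l by lra. lra. }
  replace (IZR g * INR Q / IZR q) with (INR Q / N) by (rewrite Hqg; field; lra).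
  replace (2 * Rpower (INR P) eps / eps) with (2 * E) by (unfold E, Pr; field; lra).
  fold Pr.
  eapply Rle_trans. exact Hsum.
  assert (0 <= INR Q / N) by (unfold Rdiv; apply Rmult_le_pos; [apply pos_INR| left; apply Rinv_0_lt_compat; lra]).
  assert (T <= (Pr + IZR q) * (2 * E)).
  { assert (N * L <= IZR q * E) by (apply Rmult_le_compat; lra). nra. }
  rewrite Rmult_assoc. apply Rmult_le_compat; try lra. apply pos_INR. unfold E in *. lra.
Qed.
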